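(* Let $q$ be a prime power and let $1 \le k \le m$ be integers. Then $\Lambda_q(k,m) = \mathcal{A}^G_q(k,m)$; that is, an $\mathbb{F}_{q^m}$-linear subspace $V \subseteq \mathbb{F}_{q^m}^k$ is Frobenius-closed if and only if $\dim_{\mathbb{F}_{q^m}}(V) = \mathrm{maxrk}(V)$.
   Context: For $v=(v_1,\dots,v_k)\in\mathbb{F}_{q^m}^k$, $\mathrm{rk}(v):=\dim_{\mathbb{F}_q}\mathrm{Span}_{\mathbb{F}_q}\{v_1,\dots,v_k\}$. For an $\mathbb{F}_{q^m}$-subspace $C\subseteq \mathbb{F}_{q^m}^k$ (a Gabidulin code), $\mathrm{maxrk}(C):=\max\{\mathrm{rk}(c): c\in C\}$; one always has $\dim_{\mathbb{F}_{q^m}}(C)\le \mathrm{maxrk}(C)$. $\mathcal{A}^G_q(k,m)$ denotes the set of $\mathbb{F}_{q^m}$-subspaces $C\subseteq\mathbb{F}_{q^m}^k$ with $\dim_{\mathbb{F}_{q^m}}(C)=\mathrm{maxrk}(C)$ (optimal Gabidulin anticodes). For $v\in\mathbb{F}_{q^m}^k$ let $v^q:=(v_1^q,\dots,v_k^q)$; a subspace $V\subseteq \mathbb{F}_{q^m}^k$ is Frobenius-closed if $v^q\in V$ for all $v\in V$. $\Lambda_q(k,m)$ denotes the set of Frobenius-closed $\mathbb{F}_{q^m}$-subspaces of $\mathbb{F}_{q^m}^k$ (including the zero space). *)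

(* Defs.v *)
From HB Require Import structures.
From mathcomp Require Import all_boot all_order all_algebra all_field.
Set Implicit Arguments. Unset Strict Implicit. Unset Printing Implicit Defensive.
Import GRing.Theory.
Local Open Scope ring_scope.

(* Setting: F is the finite field F_q (q = #|F|, automatically a prime power),
   L is a field extension of F with [L : F] = m, i.e. L = F_{q^m}.
   Vectors of L^k are row vectors 'rV[L]_k; F_{q^m}-subspaces of L^k are
   row spaces of matrices V : 'M[L]_k (every subspace arises this way). *)

Definition rk (F : finFieldType) (L : fieldExtType F) (k : nat) (v : 'rV[L]_k) : nat :=
  \dim <<[seq v ord0 i | i : 'I_k]>>%VS.

Definition is_maxrk (F : finFieldType) (L : fieldExtType F) (k : nat)
    (V : 'M[L]_k) (n : nat) : Prop :=
  (exists2 v : 'rV[L]_k, (v <= V)%MS & rk v = n) /\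
  (forall v : 'rV[L]_k, (v <= V)%MS -> (rk v <= n)%N).

Definition frobv (F : finFieldType) (L : fieldExtType F) (k : nat) (v : 'rV[L]_k)
  : 'rV[L]_k := map_mx (fun x => x ^+ #|F|) v.

Definition frobenius_closed (F : finFieldType) (L : fieldExtType F) (k : nat)
    (V : 'M[L]_k) : Prop :=
  forall v : 'rV[L]_k, (v <= V)%MS -> (frobv v <= V)%MS.

(* Main.v *)
From HB Require Import structures.
Require Import Defs.
From Stdlib Require Import Classical.
From mathcomp Require Import all_boot all_order all_algebra all_field.
Set Implicit Arguments. Unset Strict Implicit. Unset Printing Implicit Defensive.
Import GRing.Theory.
Local Open Scope ring_scope.
Section S.
Variables (F : finFieldType) (L : fieldExtType F).
Local Notation q := #|F|.
Lemma q_gt1 : (1 < q)%N.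
Proof. exact: finNzRing_gt1. Qed.
Lemma frobD1 (x y : L) : (x + y) ^+ q = x ^+ q + y ^+ q.
Proof.
have [p _ pcharFp] := finPcharP F; rewrite (card_pprimeChar pcharFp).
elim: (logn _ _) => // n IHn; rewrite expnSr !exprM {}IHn.
by rewrite -(pchar_lalg L) in pcharFp; rewrite -pFrobenius_autE rmorphD.
Qed.
Lemma frobD i (x y : L) : (x + y) ^+ (q ^ i) = x ^+ (q ^ i) + y ^+ (q ^ i).
Proof. by elim: i => [|i IH]; rewrite ?expn0 ?expr1 // expnSr !exprM IH frobD1. Qed.
Lemma frob0 i : (0 : L) ^+ (q ^ i) = 0.
Proof. by rewrite expr0n expn_eq0 (gtn_eqF (ltnW q_gt1)). Qed.
Lemma frobA i (a : F) : (a%:A : L) ^+ (q ^ i) = a%:A.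
Proof.
elim: i => [|i IH]; first by rewrite expn0 expr1.
by rewrite expnSr exprM IH -in_algE -rmorphXn /= expf_card.
Qed.
Lemma frobZ i (a : F) (x : L) : (a *: x) ^+ (q ^ i) = a *: x ^+ (q ^ i).
Proof. by rewrite -mulr_algl exprMn frobA mulr_algl. Qed.
Lemma frob_sum i (I : finType) (f : I -> L) :
  (\sum_j f j) ^+ (q ^ i) = \sum_j (f j) ^+ (q ^ i).
Proof. exact: (big_morph _ (@frobD i) (frob0 i)). Qed.
Variable k : nat.
Definition Xt (x : 'rV[L]_k) : k.-tuple L := [tuple x ord0 i | i < k].
Lemma XtnE (x : 'rV[L]_k) (i : 'I_k) : (Xt x)`_i = x ord0 i.
Proof. by rewrite -tnth_nth tnth_mktuple. Qed.
Definition phi (x : 'rV[L]_k) (a : 'rV[F]_k) : L := \sum_j a ord0 j *: x ord0 j.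
Definition Sp (x : 'rV[L]_k) := <<Xt x>>%VS.
Lemma phi_span x a : phi x a \in Sp x.
Proof.
apply: memv_suml => j _; apply: memvZ; apply: memv_span.
by rewrite -XtnE mem_nth // size_tuple.
Qed.
Lemma span_phi x y : y \in Sp x -> exists a, phi x a = y.
Proof.
move=> /coord_span ->; exists (\row_i coord (Xt x) i y).
by apply: eq_bigr => j _; rewrite mxE XtnE.
Qed.
Lemma phiD x y mu a : phi (x + mu *: y) a = phi x a + mu * phi y a.
Proof.
rewrite /phi mulr_sumr -big_split /=; apply: eq_bigr => j _.
by rewrite !mxE scalerDr scalerAr.
Qed.
Lemma phi_lin x (I : finType) (b : I -> F) (A : I -> 'rV[F]_k) :
  phi x (\sum_i b i *: A i) = \sum_i b i *: phi x (A i).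
Proof.
rewrite /phi; under eq_bigr do rewrite summxE scaler_suml.
rewrite exchange_big /=; apply: eq_bigr => i _; rewrite scaler_sumr.
by apply: eq_bigr => j _; rewrite !mxE scalerA.
Qed.
Lemma basis_pre x : exists A : 'I_(\dim (Sp x)) -> 'rV[F]_k,
  forall i, phi x (A i) = (vbasis (Sp x))`_i.
Proof.
have H i : exists a, phi x a == (vbasis (Sp x))`_(i : 'I_(\dim (Sp x))).
  have [a <-] : exists a, phi x a = (vbasis (Sp x))`_i.
    by apply: span_phi; apply: vbasis_mem; rewrite mem_nth // size_tuple.
  by exists a.
by exists (fun i => xchoose (H i)) => i; apply/eqP; exact: (xchooseP (H i)).
Qed.
Lemma phiDa x u c v : phi x (u + c *: v) = phi x u + c *: phi x v.
Proof.
rewrite /phi scaler_sumr -big_split /=; apply: eq_bigr => j _.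
by rewrite !mxE scalerDl scalerA.
Qed.
Lemma phiB x u v : phi x (u - v) = phi x u - phi x v.
Proof. by rewrite -scaleN1r phiDa scaleN1r. Qed.
Lemma phi_delta x j : phi x (delta_mx ord0 j) = x ord0 j.
Proof.
rewrite /phi (bigD1 j) //= big1 => [|l /negbTE ljF]; rewrite mxE.
  by rewrite !eqxx scale1r addr0.
by rewrite ljF andbF scale0r.
Qed.
Definition G x : 'M[L]_(\dim (Sp x), k) :=
  \matrix_(i, j) (coord (vbasis (Sp x)) i (x ord0 j))%:A.
Lemma Z_lem x y : (forall a, phi x a = 0 -> phi y a = 0) -> (y <= G x)%MS.
Proof.
move=> Hxy; have [A HA] := basis_pre x; set e := vbasis (Sp x) in HA *.
apply/submxP; exists (\row_i phi y (A i)); apply/rowP => j; rewrite !mxE.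
pose c i := coord e i (x ord0 j).
pose b := delta_mx ord0 j - \sum_i c i *: A i.
have xj : x ord0 j \in Sp x by apply: memv_span; rewrite -XtnE mem_nth // size_tuple.
have Hb : phi x b = 0.
  rewrite phiB phi_delta phi_lin.
  under eq_bigr do rewrite HA.
  by rewrite -(coord_vbasis xj) subrr.
have := Hxy _ Hb; rewrite phiB phi_delta phi_lin => /eqP; rewrite subr_eq0 => /eqP ->.
by apply: eq_bigr => i _; rewrite !mxE mulr_algr.
Qed.
Lemma frobv_mulG x (u : 'rV[L]_(\dim (Sp x))) : frobv (u *m G x) = frobv u *m G x.
Proof.
apply/rowP => j; rewrite !mxE.
have := frob_sum 1; rewrite expn1 => ->.
by apply: eq_bigr => i _; rewrite !mxE exprMn; have := frobA 1; rewrite expn1 => ->.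
Qed.
Lemma moore (V : 'M[L]_k) v : frobenius_closed V -> (v <= V)%MS -> (rk v <= \rank V)%N.
Proof.
move=> cl vV; change (\dim (Sp v) <= \rank V)%N.
set r := \dim (Sp v).
pose M : 'M[L]_(r, k) := \matrix_(i, j) (v ord0 j) ^+ (q ^ i).
have MV : (M <= V)%MS.
  have H n : (\row_j (v ord0 j) ^+ (q ^ n) <= V)%MS.
    elim: n => [|n IH].
      by rewrite (_ : \row_j _ = v) //; apply/rowP => j; rewrite mxE expn0 expr1.
    have := cl _ IH; rewrite /frobv; congr (_ <= _)%MS.
    by apply/rowP => j; rewrite !mxE expnSr exprM.
  apply/row_subP => i; rewrite (_ : row i M = \row_j (v ord0 j) ^+ (q ^ i)) //.
  by apply/rowP => j; rewrite !mxE.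
apply: leq_trans (mxrankS MV).
suff frM : row_free M by rewrite (eqP frM).
apply: inj_row_free => c cM0; apply/eqP; apply: contraT => c0.
have [i0 ci0] := rV0Pn _ c0.
have [A HA] := basis_pre v; set e := vbasis (Sp v) in HA *.
pose P : {poly L} := \sum_(i < r) c ord0 i *: 'X^(q ^ i).
have coefP j : P`_j = \sum_(i < r) c ord0 i * (j == (q ^ i)%N)%:R.
  by rewrite coef_sum; apply: eq_bigr => i _; rewrite coefZ coefXn.
have P0 : P != 0.
  apply/eqP => P0; have := congr1 (fun p : {poly L} => p`_(q ^ i0)) P0.
  rewrite coef0 coefP (bigD1 i0) //= eqxx mulr1 big1 ?addr0.
    by move=> /eqP; rewrite (negbTE ci0).
  move=> i ii0; rewrite eqn_exp2l ?q_gt1 //.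
  by rewrite (_ : (i0 == i :> nat) = false) ?mulr0 //; apply/negbTE; rewrite eq_sym.
have szP : (size P <= q ^ r)%N.
  apply/leq_sizeP => j hj; rewrite coefP big1 // => i _.
  rewrite (_ : (j == (q ^ i)%N) = false) ?mulr0 //; apply/negbTE; rewrite neq_ltn.
  by rewrite orbC (leq_trans _ hj) // ltn_exp2l ?q_gt1.
have rootP a : root P (phi v a).
  rewrite rootE horner_sum; under eq_bigr do rewrite hornerZ hornerXn.
  rewrite /phi; under eq_bigr do rewrite frob_sum.
  under eq_bigr do rewrite mulr_sumr.
  rewrite exchange_big /= big1 // => j _.
  rewrite (eq_bigr (fun i => a ord0 j *: (c ord0 i * v ord0 j ^+ (q ^ i)))); last first.
    by move=> i _; rewrite frobZ scalerAr.
  rewrite -scaler_sumr; have := congr1 (fun m : 'M[L]_(1, k) => m ord0 j) cM0; rewrite !mxE.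
  rewrite (eq_bigr (fun i => c ord0 i * v ord0 j ^+ (q ^ i))) => [-> |]; first by rewrite scaler0.
  by move=> i _; rewrite mxE.
pose rs := [seq \sum_i b ord0 i *: e`_i | b : 'rV[F]_r].
have := @max_poly_roots _ P rs P0.
have -> : all (root P) rs.
  apply/allP => y /mapP [b _ ->].
  rewrite (eq_bigr (fun i => b ord0 i *: phi v (A i))); last by move=> i _; rewrite HA.
  by rewrite -phi_lin.
have -> : uniq rs.
  rewrite map_inj_uniq ?enum_uniq // => b1 b2 eqb.
  move/freeP: (basis_free (vbasisP (Sp v))) => /(_ (fun i => b1 ord0 i - b2 ord0 i)) H.
  apply/rowP => i; apply/eqP; rewrite -subr_eq0; apply/eqP.
  apply: H; under eq_bigr do rewrite scalerBl.
  by rewrite sumrB eqb subrr.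
rewrite size_map -cardE card_mx mul1n => /(_ isT isT) h.
by have := leq_trans h szP; rewrite ltnn.
Qed.
Lemma main_lem v w a : (forall mu : L, (rk (w + mu *: v) <= rk v)%N) ->
  (rk v < \dim {:L})%N -> phi v a = 0 -> phi w a = 0.
Proof.
move=> Hmu rn va; apply/eqP; apply: contraT => wa.
set al := phi w a in wa.
have {}rn : (\dim (Sp v) < \dim {:L})%N := rn; set r := \dim (Sp v) in rn.
have [A HA] := basis_pre v; set e := vbasis (Sp v) in HA *.
have efree := basis_free (vbasisP (Sp v)); rewrite -/e in efree.
pose g (kf : {ffun 'I_r.+1 -> F}) : L :=
  - (kf ord0 *: al + \sum_i kf (lift ord0 i) *: phi w (A i)) /
    (\sum_i kf (lift ord0 i) *: e`_i).
pose B (i : 'I_r.+1) := if unlift ord0 i is Some i' then A i' else a.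
have claim mu : exists2 kf, kf \in [set~ [ffun=> 0 : F]] & mu = g kf.
  pose z := w + mu *: v.
  pose ys := [tuple phi z (B i) | i < r.+1].
  have sub : (<<ys>> <= Sp z)%VS.
    by apply/span_subvP => y /tnthP [i ->]; rewrite tnth_mktuple; apply: phi_span.
  have nfree : ~~ free ys.
    have hz : (\dim (Sp z) <= r)%N := Hmu mu.
    by rewrite /free size_tuple neq_ltn ltnS (leq_trans (dimvS sub) hz).
  move/freeP: nfree => nf; have [kk nk] := not_all_ex_not _ _ nf; have [rel nk2] := imply_to_and _ _ nk; have [i0 ki0] := not_all_ex_not _ _ nk2.
  have ysE (i : 'I_r.+1) : ys`_i = phi z (B i) by rewrite -tnth_nth tnth_mktuple.
  have rel' : kk ord0 *: al + \sum_(i < r) kk (lift ord0 i) *: (phi w (A i) + mu * e`_i) = 0.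
    have rel2 : \sum_i kk i *: phi z (B i) = 0.
      by rewrite -[RHS]rel; apply: eq_bigr => i _; rewrite ysE.
    rewrite -[RHS]rel2 big_ord_recl; congr (_ + _).
      by rewrite /B unlift_none /z phiD va mulr0 addr0.
    by apply: eq_bigr => i _; rewrite /B liftK /z phiD HA.
  move: rel'; under eq_bigr do rewrite scalerDr scalerAr.
  rewrite big_split /= -mulr_sumr addrA => {}rel.
  set N := kk ord0 *: al + \sum_(i < r) kk (lift ord0 i) *: phi w (A i) in rel.
  set D := \sum_(i < r) kk (lift ord0 i) *: e`_i in rel.
  have D0 : D != 0.
    apply/eqP => D0; move/freeP: efree => /(_ _ D0) kl.
    move: rel; rewrite D0 mulr0 addr0 /N big1 ?addr0 => [|i _]; last by rewrite kl scale0r.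
    move/eqP; rewrite scaler_eq0 (negbTE wa) orbF => /eqP k0.
    by apply: ki0; case: (unliftP ord0 i0) => [j ->|->].
  exists [ffun i => kk i].
    rewrite !inE; apply/eqP => /ffunP /(_ i0); rewrite !ffunE; exact: ki0.
  rewrite /g; under eq_bigr do rewrite ffunE.
  under [X in _ = _ / X]eq_bigr do rewrite ffunE.
  rewrite ffunE -/D -/N; apply: (mulIf D0); rewrite mulfVK //.
  by apply/eqP; rewrite -addr_eq0 addrC rel.
set n := \dim {:L} in rn.
pose cL (x : L) : 'rV[F]_n := \row_i coord (vbasis {:L}) i x.
have Lfree := basis_free (vbasisP {:L}).
have surj (y : 'rV[F]_n) : cL (\sum_i y ord0 i *: (vbasis {:L})`_i) = y.
  apply/rowP => i; rewrite mxE linear_sum (bigD1 i) //= big1 => [|j ji].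
    by rewrite linearZ /= coord_free // eqxx mulr1 addr0.
  by rewrite linearZ /= coord_free // (negbTE ji) mulr0.
have : [set: 'rV[F]_n] \subset [set cL (g kf) | kf in [set~ [ffun=> 0 : F]]].
  apply/subsetP => y _; have [kf kfD mE] := claim (\sum_i y ord0 i *: (vbasis {:L})`_i).
  by apply/imsetP; exists kf => //; rewrite -mE surj.
move/subset_leq_card/leq_trans/(_ (leq_imset_card _ _)).
rewrite cardsC1 card_ffun card_ord cardsT card_mx mul1n => h.
have : (#|F| ^ r.+1 <= #|F| ^ n)%N by rewrite leq_exp2l ?q_gt1.
move=> H; have := leq_trans H h.
by rewrite leqNgt ltn_predL expn_gt0 (ltnW q_gt1).
Qed.
End S.

Lemma ex_max (P : nat -> Prop) b n0 : P n0 -> (forall n, P n -> (n <= b)%N) ->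
  exists n, P n /\ forall m, P m -> (m <= n)%N.
Proof.
move=> P0 Pb; apply: NNPP => nomax.
have H i : exists n, P n /\ (i <= n)%N.
  elim: i => [|i [n [Pn le]]]; first by exists n0.
  apply: NNPP => hn; apply: nomax; exists n; split => // m Pm.
  rewrite leqNgt; apply/negP => lt; apply: hn; exists m; split => //.
  exact: leq_ltn_trans le lt.
have [n [Pn le]] := H b.+1; have := leq_trans le (Pb _ Pn).
by rewrite ltnn.
Qed.

Lemma rk_le (F : finFieldType) (L : fieldExtType F) (k : nat) (v : 'rV[L]_k) :
  (rk v <= k)%N.
Proof.
change (\dim <<Xt v>> <= k)%N; apply: leq_trans (dim_span _) _.
by rewrite size_tuple.
Qed.

Lemma VG (F : finFieldType) (L : fieldExtType F) (k : nat) (V : 'M[L]_k) v :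
  (v <= V)%MS -> (forall w, (w <= V)%MS -> (rk w <= rk v)%N) ->
  (rk v < \dim {:L})%N -> (V <= G v)%MS.
Proof.
move=> vV mx rn; apply/row_subP => i; apply: Z_lem => a va.
apply: (main_lem _ rn va) => mu; apply: mx.
by rewrite addmx_sub ?row_sub ?scalemx_sub.
Qed.

Unset Implicit Arguments.

Theorem theorem3p11 (F : finFieldType) (L : fieldExtType F) (k : nat)
    (Hk1 : (1 <= k)%N) (Hkm : (k <= \dim {:L})%N) (V : 'M[L]_k) :
  frobenius_closed V <-> is_maxrk V (\rank V).
Proof.
split.
  move=> cl.
  have bnd : forall n, (exists2 v : 'rV[L]_k, (v <= V)%MS & rk v = n) -> (n <= k)%N.
    by move=> n [w _ <-]; apply: rk_le.
  have P0 : exists2 v : 'rV[L]_k, (v <= V)%MS & rk v = rk (0 : 'rV[L]_k).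
    by exists 0; rewrite ?sub0mx.
  have [r [[v vV rv] mx]] := ex_max P0 bnd.
  have mx' w : (w <= V)%MS -> (rk w <= rk v)%N.
    by move=> wV; rewrite rv; apply: mx; exists w.
  have le1 := moore cl vV.
  have le2 : (\rank V <= rk v)%N.
    case: (ltnP (rk v) (\dim {:L})) => rn.
      apply: leq_trans (mxrankS (VG vV mx' rn)) _; exact: rank_leq_row.
    by apply: leq_trans rn; apply: leq_trans Hkm; apply: rank_leq_col.
  split; first by exists v => //; apply/eqP; rewrite eqn_leq le1 le2.
  by move=> w wV; apply: leq_trans (mx' _ wV) le1.
case=> [[v vV rv] hall] x xV.
have mx' w : (w <= V)%MS -> (rk w <= rk v)%N by move=> wV; rewrite rv; apply: hall.
case: (ltnP (rk v) (\dim {:L})) => rn.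
  have VGv := VG vV mx' rn.
  have GV : (G v <= V)%MS.
    have /andP [_ ->] // : (V == G v)%MS.
    rewrite -(mxrank_leqif_eq VGv).2 eqn_leq mxrankS //=.
    by apply: leq_trans (rank_leq_row _) _; rewrite -rv.
  have /submxP [u ->] := submx_trans xV VGv.
  by rewrite frobv_mulG; apply: submx_trans (submxMl _ _) GV.
apply: submx_full; rewrite /row_full eqn_leq rank_leq_col /=.
by rewrite -rv; apply: leq_trans rn.
Qed.
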